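(* Let $p$ be a prime, $d \geq 1$, $V = \mathbb{F}_p^d$, and let $G \leq \mathrm{GL}(V)$ be an irreducible linear group on $V$. Then $\overrightarrow{\mathrm{diam}}(V, G) \leq d(p-1)$.
   Context: Vectors are row vectors and $G$ acts on $V$ by right multiplication. For a subset $\Delta \subseteq V$ and a positive integer $m$, $m \cdot \Delta$ denotes the $m$-fold sumset $\{\delta_1 + \dots + \delta_m \mid \delta_i \in \Delta\}$. $\overrightarrow{\mathrm{diam}}(V, G)$ denotes the maximum of the directed diameters of the nondiagonal orbital graphs of the affine permutation group $VG = \{ v \mapsto b + vA \mid b \in V, A \in G\}$ on $V$, i.e. of the Cayley digraphs on $V$ with connection set a nonzero $G$-orbit $\mathcal{O}$ (arcs $u \to u + w$, $w \in \mathcal{O}$); equivalently, it is the least positive integer $m$ such that $m \cdot (\mathcal{O} \cup \{0\}) = V$ for every nonzero orbit $\mathcal{O}$ of $G$ on $V$. *)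

(* Defs.v *)
From mathcomp Require Import all_boot all_order all_algebra.
Set Implicit Arguments. Unset Strict Implicit. Unset Printing Implicit Defensive.
Import GRing.Theory.
Local Open Scope ring_scope.

(* V = F^d realised as row vectors 'rV[F]_d; matrices act by right multiplication. *)

Definition is_linear_group (F : finFieldType) (d : nat) (G : {set 'M[F]_d}) :=
  [/\ 1%:M \in G,
      forall A, A \in G -> A \in unitmx,
      forall A B, A \in G -> B \in G -> A *m B \in G
    & forall A, A \in G -> invmx A \in G].

Definition G_invariant (F : finFieldType) (d : nat) (G : {set 'M[F]_d}) (U : 'M[F]_d) :=
  forall A, A \in G -> (U *m A <= U)%MS.

Definition irreducible_linear_group (F : finFieldType) (d : nat) (G : {set 'M[F]_d}) :=
  (0 < d)%N /\
  forall U : 'M[F]_d, G_invariant G U -> (U == (0 : 'M[F]_d))%MS \/ (U == 1%:M)%MS.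

Definition orbitG (F : finFieldType) (d : nat) (G : {set 'M[F]_d}) (v : 'rV[F]_d)
  : {set 'rV[F]_d} := [set v *m A | A in G].

Fixpoint sumset (F : finFieldType) (d : nat) (m : nat) (D : {set 'rV[F]_d})
  : {set 'rV[F]_d} :=
  match m with
  | 0 => [set 0]
  | m'.+1 => [set x + y | x in sumset m' D, y in D]
  end.

Definition covers_all_orbits (F : finFieldType) (d : nat) (G : {set 'M[F]_d}) (m : nat) :=
  forall v : 'rV[F]_d, v != 0 ->
    sumset m (orbitG G v :|: [set 0]) = [set: 'rV[F]_d].

(* diam->(V,G) <= k : the least positive m covering all nonzero orbits
   exists and is at most k. *)
Definition dirdiam_le (F : finFieldType) (d : nat) (G : {set 'M[F]_d}) (k : nat) :=
  exists m : nat, [/\ (0 < m)%N, (m <= k)%N & covers_all_orbits G m].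

(* Main.v *)
Require Import Defs.
From mathcomp Require Import all_boot all_order all_algebra.
Set Implicit Arguments. Unset Strict Implicit. Unset Printing Implicit Defensive.
Import GRing.Theory.
Local Open Scope ring_scope.

Section S.
Variables (F : finFieldType) (d : nat).
Implicit Types (D : {set 'rV[F]_d}).

Lemma sumsetS m D x y : x \in sumset m D -> y \in D -> x + y \in sumset m.+1 D.
Proof. by move=> hx hy /=; apply/imset2P; exists x y. Qed.

Lemma sumset_mono m n D x : 0 \in D -> x \in sumset m D -> x \in sumset (m + n) D.
Proof.
move=> h0 hx; elim: n => [|n IH]; first by rewrite addn0.
by rewrite addnS -[x]addr0; apply: sumsetS.
Qed.

Lemma sumset_mul m n k D x o : 0 \in D -> o \in D -> x \in sumset m D ->
  (k <= n)%N -> x + o *+ k \in sumset (m + n) D.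
Proof.
move=> h0 ho hx; elim: k n => [|k IH] n hk; first by rewrite mulr0n addr0 sumset_mono.
case: n hk => // n hk; rewrite addnS mulrS (addrC o) addrA; apply: sumsetS => //.
exact: IH.
Qed.
End S.

Theorem corollary2p2 (p d : nat) (G : {set 'M['F_p]_d}) :
  prime p -> (1 <= d)%N ->
  is_linear_group G -> irreducible_linear_group G ->
  dirdiam_le G (d * (p - 1)).
Proof.
move=> pp d1 [G1 _ GM _] [_ irr].
have p1 : (1 < p)%N by apply: prime_gt1.
exists (d * (p - 1))%N; split => //; first by rewrite muln_gt0 d1 subn_gt0.
move=> v v0.
set D := orbitG G v :|: [set 0].
have h0 : (0 : 'rV_d) \in D by rewrite !inE eqxx orbT.
set W := (\sum_(A in G) <<v *m A>>)%MS.
have vW : (v <= W)%MS.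
  by apply: (sumsmx_sup 1%:M) => //; rewrite mulmx1 genmxE.
have W1 : (1%:M <= W)%MS.
  have inv : G_invariant G W.
    move=> B HB; rewrite /W sumsmxMr; apply/sumsmx_subP => A HA.
    rewrite (eqmxMr B (genmxE _)).
    by apply: (sumsmx_sup (A *m B)); rewrite ?GM // mulmxA genmxE.
  case: (irr W inv) => /andP [h1 h2] //.
  by move: (submx_trans vW h1); rewrite submx0 (negbTE v0).
have key : forall r, exists U : 'M_d, ((r <= \rank U)%N || (1%:M <= U)%MS) /\
    forall w : 'rV_d, (w <= U)%MS -> w \in sumset (r * (p - 1)) D.
  elim=> [|r [U [hr hU]]].
    exists 0; split => // w; rewrite submx0 => /eqP ->; by rewrite inE.
  case: (boolP (1%:M <= U)%MS) => hU1.
    exists U; rewrite hU1 orbT; split => // w /hU hw.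
    by rewrite mulSn addnC sumset_mono.
  rewrite (negbTE hU1) orbF in hr.
  have [o oO oU] : exists2 o, o \in orbitG G v & ~~ (o <= U)%MS.
    apply/exists_inP; rewrite -negb_forall_in; apply/negP => /forall_inP hall.
    suff : (W <= U)%MS by move/(submx_trans W1); rewrite (negbTE hU1).
    apply/sumsmx_subP => A HA.
    by rewrite genmxE hall //; apply/imsetP; exists A.
  exists (U + o)%MS; split.
    apply/orP; left; apply: leq_ltn_trans hr _.
    have : (U < U + o)%MS.
      rewrite ltmxE addsmxSl /=; apply: contra oU => h.
      exact: submx_trans (addsmxSr U o) h.
    by rewrite ltmxErank => /andP [].
  move=> w /sub_addsmxP [[a b] ->] /=.
  have ha : (a *m U <= U)%MS by apply: submxMl.
  rewrite [b]mx11_scalar mul_scalar_mx.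
  set c := b 0 0.
  have cp : (val c < p)%N by case: c => n /=; rewrite Fp_cast.
  have hc : c = (val c)%:R.
    by apply: val_inj; rewrite /= val_Fp_nat // modn_small.
  have hcp : (val c <= p - 1)%N.
    by rewrite -ltnS subn1 prednK // ltnW.
  rewrite hc scaler_nat mulSn addnC; apply: sumset_mul => //.
    by rewrite inE oO.
  exact: hU.
have [U [hr hU]] := key d.
apply/setP => w; rewrite inE; apply: hU.
case/orP: hr => h; last by apply: submx_trans (submx1 _) h.
by apply: submx_full; rewrite /row_full eqn_leq rank_leq_col h.
Qed.
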